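(* For $i = 1, \ldots, m-1$ the following hold. (a) $\mathcal{Q}_{i}^{\mathbb{B}}(\lambda \mathcal{D}_{i})\mathcal{R}_{i} = \lambda \mathcal{D}_{i+1} + \mathcal{T}_{i}$, and $\mathcal{Q}_{i}^{\mathbb{B}}(\mathbb{M}_{m-(i+1)}\mathbb{M}_{m-i})\mathcal{R}_{i} = \mathbb{M}_{m-(i+1)} + \mathcal{T}_{i}$. (b) $\mathcal{R}_{i}^{\mathbb{B}}(\lambda \mathcal{D}_{i})\mathcal{Q}_{i} = \lambda \mathcal{D}_{i+1} + \mathcal{T}_{i}^{\mathbb{B}}$, and $\mathcal{R}_{i}^{\mathbb{B}}(\mathbb{M}_{m-i}\mathbb{M}_{m-(i+1)})\mathcal{Q}_{i} = \mathbb{M}_{m-(i+1)} + \mathcal{T}_{i}^{\mathbb{B}}$. (c) $\mathcal{T}_{i}\mathbb{M}_{j} = \mathbb{M}_{j}\mathcal{T}_{i} = \mathcal{T}_{i}$ and $\mathcal{T}_{i}^{\mathbb{B}}\mathbb{M}_{j} = \mathbb{M}_{j}\mathcal{T}_{i}^{\mathbb{B}} = \mathcal{T}_{i}^{\mathbb{B}}$ for all $j \leq m-i-2$.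
   Context: Let $P(\lambda) = \sum_{j=0}^m \lambda^j A_j$ ($A_j\in\mathbb{C}^{n\times n}$, $A_m\ne 0$) and $\mathcal{S}(\lambda) = \left[\begin{array}{c|c} P(\lambda) & C \\ \hline B & A-\lambda E\end{array}\right]$ with $A,E\in\mathbb{C}^{r\times r}$, $B\in\mathbb{C}^{r\times n}$, $C\in\mathbb{C}^{n\times r}$. Fiedler matrices: $M_0=\mathrm{diag}(I_{(m-1)n},-A_0)$, $M_m = \mathrm{diag}(A_m,I_{(m-1)n})$, $M_i=\mathrm{diag}\left(I_{(m-i-1)n},\left[\begin{smallmatrix}-A_i & I_n\\ I_n & 0\end{smallmatrix}\right],I_{(i-1)n}\right)$ for $1\le i\le m-1$; $\mathbb{M}_0 = \left[\begin{array}{c|c} M_0 & -e_m\otimes C\\ \hline -e_m^T\otimes B & -A\end{array}\right]$ ($e_m$ the $m$-th column of $I_m$), $\mathbb{M}_m=\mathrm{diag}(M_m,-E)$, $\mathbb{M}_i=\mathrm{diag}(M_i,I_r)$. Horner shifts: $P_k(\lambda) = A_{m-k}+\lambda A_{m-k+1}+\cdots+\lambda^k A_m$, $k=0,\ldots,m$. For $1\le i\le m-1$ define $nm\times nm$ matrix polynomials $Q_i = \mathrm{diag}\left(I_{(i-1)n},\left[\begin{smallmatrix} I_n & \lambda I_n\\ 0_n & I_n\end{smallmatrix}\right], I_{(m-i-1)n}\right)$, $R_i = \mathrm{diag}\left(I_{(i-1)n},\left[\begin{smallmatrix} 0_n & I_n\\ I_n & P_i(\lambda)\end{smallmatrix}\right],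 I_{(m-i-1)n}\right)$, $T_i = \mathrm{diag}\left(0_{(i-1)n},\left[\begin{smallmatrix} 0_n & \lambda P_{i-1}(\lambda)\\ \lambda I_n & \lambda^2 P_{i-1}(\lambda)\end{smallmatrix}\right], 0_{(m-i-1)n}\right)$, $D_i = \mathrm{diag}(0_{(i-1)n}, P_{i-1}(\lambda), I_{(m-i)n})$, and $D_m = \mathrm{diag}(0_{(m-1)n}, P_{m-1}(\lambda))$. The $(nm+r)\times(nm+r)$ auxiliary system polynomials are $\mathcal{Q}_i = \mathrm{diag}(Q_i, I_r)$, $\mathcal{R}_i=\mathrm{diag}(R_i,I_r)$, $\mathcal{T}_i=\mathrm{diag}(T_i,0_r)$, $\mathcal{D}_i=\mathrm{diag}(D_i,-E)$ ($1\le i\le m$). For a block matrix $H=(H_{ij})$ with $n\times n$ blocks, the block transpose $H^{\mathcal{B}}$ has $(H^{\mathcal{B}})_{ij}=H_{ji}$; for a system matrix $\mathcal{A}=\left[\begin{array}{c|c} A & e_i\otimes X\\ \hline e_j^T\otimes Y & Z\end{array}\right]$ its block transpose is $\mathcal{A}^{\mathbb{B}}=\left[\begin{array}{c|c} A^{\mathcal{B}} & e_j\otimes X\\ \hline e_i^T\otimes Y & Z\end{array}\right]$; in particular $\mathcal{Q}_i^{\mathbb{B}} = \mathrm{diag}(Q_i^{\mathcal{B}}, I_r)$, $\mathcal{R}_i^{\mathbb{B}}=\mathcal{R}_i$, $\mathcal{T}_i^{\mathbb{B}} = \mathrm{diag}(T_i^{\mathcal{B}},0_r)$. *)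

(* Defs.v *)
(* Matrices of polynomials in lambda = 'X over a field F. *)
From HB Require Import structures.
From mathcomp Require Import all_boot all_order all_algebra.
Set Implicit Arguments. Unset Strict Implicit. Unset Printing Implicit Defensive.
Import GRing.Theory.
Local Open Scope ring_scope.

Lemma modn_ord_lt (m n : nat) (p : 'I_(m * n)) : (p %% n < n)%N.
Proof.
case: n p => [|n] p; last by rewrite ltn_mod.
by case: p => k; rewrite muln0.
Qed.

Definition mord (m n : nat) (p : 'I_(m * n)) : 'I_n := Ordinal (modn_ord_lt p).

Section Defs.
Variable F : fieldType.
Local Notation PF := {poly F}.

(* An (m*n) x (m*n) matrix given by its n x n blocks f a b,
   with 0-based block indices a, b (block (a,b) is the paper's (a+1,b+1)). *)
Definition mkblk (m n : nat) (f : nat -> nat -> 'M[PF]_n) : 'M[PF]_(m * n) :=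
  \matrix_(p, q) f (p %/ n)%N (q %/ n)%N (mord p) (mord q).

(* block transpose (H^B)_{ab} = H_{ba} on block descriptions *)
Definition blkT (n : nat) (f : nat -> nat -> 'M[PF]_n) : nat -> nat -> 'M[PF]_n :=
  fun a b => f b a.

Definition cst (k l : nat) (M : 'M[F]_(k, l)) : 'M[PF]_(k, l) := map_mx polyC M.

Variables (m n r : nat) (Ac : nat -> 'M[F]_n)
          (A E : 'M[F]_r) (B : 'M[F]_(r, n)) (C : 'M[F]_(n, r)).

Definition horner_shift (k : nat) : 'M[PF]_n :=
  \sum_(j < k.+1) 'X^j *: cst (Ac (m - k + j)%N).

Definition M0_blk (a b : nat) : 'M[PF]_n :=
  if a == b then (if a == (m - 1)%N then - cst (Ac 0%N) else 1%:M) else 0.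
Definition Mm_blk (a b : nat) : 'M[PF]_n :=
  if a == b then (if a == 0%N then cst (Ac m) else 1%:M) else 0.
Definition Mi_blk (i a b : nat) : 'M[PF]_n :=
  let k := (m - i - 1)%N in
  if (a == k) && (b == k) then - cst (Ac i)
  else if ((a == k) && (b == k.+1)) || ((a == k.+1) && (b == k)) then 1%:M
  else if (a == k.+1) && (b == k.+1) then 0
  else if a == b then 1%:M else 0.
Definition fiedler_blk (i : nat) : nat -> nat -> 'M[PF]_n :=
  if i == 0%N then M0_blk else if i == m then Mm_blk else Mi_blk i.

(* e_m (x) C  and  e_m^T (x) B *)
Definition emC : 'M[PF]_(m * n, r) :=
  \matrix_(p, q) if (p %/ n == m - 1)%N then cst C (mord p) q else 0.
Definition emB : 'M[PF]_(r, m * n) :=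
  \matrix_(p, q) if (q %/ n == m - 1)%N then cst B p (mord q) else 0.

Definition sysM (i : nat) : 'M[PF]_(m * n + r) :=
  if i == 0%N then block_mx (mkblk m (fiedler_blk 0)) (- emC) (- emB) (- cst A)
  else if i == m then block_mx (mkblk m (fiedler_blk m)) 0 0 (- cst E)
  else block_mx (mkblk m (fiedler_blk i)) 0 0 1%:M.

(* Q_i, R_i, T_i, D_i blockwise (paper's blocks i, i+1 are 0-based i-1, i) *)
Definition Q_blk (i a b : nat) : 'M[PF]_n :=
  if (a == i.-1) && (b == i) then 'X *: 1%:M
  else if a == b then 1%:M else 0.
Definition R_blk (i a b : nat) : 'M[PF]_n :=
  if (a == i.-1) && (b == i.-1) then 0
  else if ((a == i.-1) && (b == i)) || ((a == i) && (b == i.-1)) then 1%:M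
  else if (a == i) && (b == i) then horner_shift i
  else if a == b then 1%:M else 0.
Definition T_blk (i a b : nat) : 'M[PF]_n :=
  if (a == i.-1) && (b == i) then 'X *: horner_shift i.-1
  else if (a == i) && (b == i.-1) then 'X *: 1%:M
  else if (a == i) && (b == i) then 'X ^+ 2 *: horner_shift i.-1
  else 0.
Definition D_blk (i a b : nat) : 'M[PF]_n :=
  if a == b then
    (if a == i.-1 then horner_shift i.-1 else if (i <= a)%N then 1%:M else 0)
  else 0.

Definition sysQ (i : nat) : 'M[PF]_(m * n + r) :=
  block_mx (mkblk m (Q_blk i)) 0 0 1%:M.
Definition sysQB (i : nat) : 'M[PF]_(m * n + r) :=
  block_mx (mkblk m (blkT (Q_blk i))) 0 0 1%:M.
Definition sysR (i : nat) : 'M[PF]_(m * n + r) :=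
  block_mx (mkblk m (R_blk i)) 0 0 1%:M.
Definition sysRB (i : nat) : 'M[PF]_(m * n + r) :=
  block_mx (mkblk m (blkT (R_blk i))) 0 0 1%:M.
Definition sysT (i : nat) : 'M[PF]_(m * n + r) :=
  block_mx (mkblk m (T_blk i)) 0 0 0.
Definition sysTB (i : nat) : 'M[PF]_(m * n + r) :=
  block_mx (mkblk m (blkT (T_blk i))) 0 0 0.
Definition sysD (i : nat) : 'M[PF]_(m * n + r) :=
  block_mx (mkblk m (D_blk i)) 0 0 (- cst E).

End Defs.

(* Main.v *)
Require Import Defs.
From HB Require Import structures.
From mathcomp Require Import all_boot all_order all_algebra.
From mathcomp Require Import zify.
Set Implicit Arguments. Unset Strict Implicit. Unset Printing Implicit Defensive.
Import GRing.Theory.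
Local Open Scope ring_scope.

Ltac ifs := repeat (case: ifP => ?; try (exfalso; lia)); try done.
Ltac msimp := do 3 rewrite ?(mul0mx, mulmx0, mul1mx, mulmx1, add0r, addr0, scaler0, scale0r,
   mulNmx, mulmxN, scalerN, scalerA, mulmxDl, mulmxDr, scalerDr) -?scalemxAl -?scalemxAr -?expr2.

Lemma sum_split_nat (V : nmodType) (m n : nat) (G : nat -> V) :
  \sum_(s < m * n) G s = \sum_(c < m) \sum_(k < n) G (c * n + k)%N.
Proof.
elim: m => [|m IH]; first by rewrite mul0n !big_ord0.
rewrite big_ord_recr /= -IH -!(big_mkord xpredT) mulSnr.
rewrite (big_cat_nat _ (leq_addr n (m * n)%N)) //=; congr (_ + _).
rewrite -[in LHS](add0n (m * n)%N) big_addn add0n addKn big_mkord; apply: eq_bigr => k _; by rewrite addnC.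
Qed.

Section Blk.
Variables (F : fieldType) (m n : nat).
Local Notation PF := {poly F}.
Local Notation M := 'M[PF]_n.

Lemma sum_blk (V : nmodType) (H : nat -> 'I_n -> V) :
  \sum_(s < m * n) H (s %/ n)%N (mord s) = \sum_(c < m) \sum_(k < n) H c k.
Proof.
case: n H => [|n'] H.
  rewrite [RHS]big1 => [|c _]; last by rewrite big_ord0.
  by apply: big1 => s _; have := ltn_ord s; move/leq_trans/(_ (eq_leq (muln0 m))).
pose G s := H (s %/ n'.+1)%N (inord (s %% n'.+1)).
transitivity (\sum_(s < m * n'.+1) G s).
  apply: eq_bigr => s _; rewrite /G.
  have -> : inord (s %% n'.+1) = mord s.
    by apply: val_inj; rewrite /= inordK // ltn_mod.
  by [].
rewrite sum_split_nat; apply: eq_bigr => c _.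
apply: eq_bigr => k _; rewrite /G.
have e1 : ((c * n'.+1 + k) %/ n'.+1 = c)%N.
  by rewrite divnMDl // divn_small ?addn0.
have e2 : ((c * n'.+1 + k) %% n'.+1 = k)%N.
  by rewrite modnMDl modn_small.
by rewrite e1 e2 inord_val.
Qed.

Lemma sum_blk' (V : nmodType) (H : nat -> 'I_n -> V) (G : 'I_(m * n) -> V) :
  (forall s, G s = H (s %/ n)%N (mord s)) ->
  \sum_(s < m * n) G s = \sum_(c < m) \sum_(k < n) H c k.
Proof. by move=> e; rewrite -sum_blk; apply: eq_bigr => s _; rewrite e. Qed.

Lemma mkblk_mul (f g : nat -> nat -> M) :
  mkblk m f *m mkblk m g = mkblk m (fun a b => \sum_(c < m) f a c *m g c b).
Proof.
apply/matrixP => p q; rewrite !mxE summxE.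
rewrite (@sum_blk' _ (fun c k => f (p %/ n)%N c (mord p) k * g c (q %/ n)%N k (mord q))); last by move=> s; rewrite !mxE.
 apply: eq_bigr => c _; by rewrite mxE.
Qed.

Definition mkcol r (g : nat -> 'M[PF]_(n, r)) : 'M[PF]_(m * n, r) :=
  \matrix_(p, q) g (p %/ n)%N (mord p) q.
Definition mkrow r (g : nat -> 'M[PF]_(r, n)) : 'M[PF]_(r, m * n) :=
  \matrix_(p, q) g (q %/ n)%N p (mord q).

Lemma mkblk_mulcol r (f : nat -> nat -> M) (g : nat -> 'M[PF]_(n, r)) :
  mkblk m f *m mkcol g = mkcol (fun a => \sum_(c < m) f a c *m g c).
Proof.
apply/matrixP => p q; rewrite !mxE summxE.
rewrite (@sum_blk' _ (fun c k => f (p %/ n)%N c (mord p) k * g c k q)); last by move=> s; rewrite !mxE.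
 apply: eq_bigr => c _; by rewrite mxE.
Qed.

Lemma mkrow_mulblk r (f : nat -> nat -> M) (g : nat -> 'M[PF]_(r, n)) :
  mkrow g *m mkblk m f = mkrow (fun b => \sum_(c < m) g c *m f c b).
Proof.
apply/matrixP => p q; rewrite !mxE summxE.
rewrite (@sum_blk' _ (fun c k => g c p k * f c (q %/ n)%N k (mord q))); last by move=> s; rewrite !mxE.
 apply: eq_bigr => c _; by rewrite mxE.
Qed.

Lemma div_lt (p : 'I_(m * n)) : (p %/ n < m)%N.
Proof.
case: n p => [|n'] p; first by have := ltn_ord p; move/leq_trans/(_ (eq_leq (muln0 m))).
by rewrite ltn_divLR.
Qed.

Lemma mkblk_ext (f g : nat -> nat -> M) :
  (forall a b, (a < m)%N -> (b < m)%N -> f a b = g a b) -> mkblk m f = mkblk m g.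
Proof. by move=> H; apply/matrixP => p q; rewrite !mxE H // div_lt. Qed.

Lemma mkcol_ext r (f g : nat -> 'M[PF]_(n, r)) :
  (forall a, (a < m)%N -> f a = g a) -> mkcol f = mkcol g.
Proof. by move=> H; apply/matrixP => p q; rewrite !mxE H // div_lt. Qed.

Lemma mkrow_ext r (f g : nat -> 'M[PF]_(r, n)) :
  (forall a, (a < m)%N -> f a = g a) -> mkrow f = mkrow g.
Proof. by move=> H; apply/matrixP => p q; rewrite !mxE H // div_lt. Qed.

Lemma mkblk_add (f g : nat -> nat -> M) :
  mkblk m f + mkblk m g = mkblk m (fun a b => f a b + g a b).
Proof. by apply/matrixP => p q; rewrite !mxE. Qed.

Lemma mkblk_scale x (f : nat -> nat -> M) :
  x *: mkblk m f = mkblk m (fun a b => x *: f a b).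
Proof. by apply/matrixP => p q; rewrite !mxE. Qed.

Lemma mkblk_opp (f : nat -> nat -> M) :
  - mkblk m f = mkblk m (fun a b => - f a b).
Proof. by apply/matrixP => p q; rewrite !mxE. Qed.

Lemma mkcol0 r : mkcol (fun _ => 0 : 'M[PF]_(n, r)) = 0.
Proof. by apply/matrixP => p q; rewrite !mxE. Qed.
Lemma mkrow0 r : mkrow (fun _ => 0 : 'M[PF]_(r, n)) = 0.
Proof. by apply/matrixP => p q; rewrite !mxE. Qed.

Lemma sum_window (V : nmodType) w k (G : nat -> V) :
  (w + k <= m)%N -> (forall c, (c < m)%N -> ~~ (w <= c < w + k)%N -> G c = 0) ->
  \sum_(c < m) G c = \sum_(z < k) G (w + z)%N.
Proof.
move=> hwk H; rewrite -(big_mkord xpredT).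
rewrite (@big_cat_nat _ _ _ w) /=; [|lia|lia].
rewrite (@big_cat_nat _ _ _ (w + k)%N w) /=; [|lia|lia].
rewrite big1_seq ?add0r; last first.
  move=> c; rewrite mem_index_iota => /andP[_ hc]; apply: H; lia.
rewrite [X in _ + X]big1_seq ?addr0; last first.
  move=> c; rewrite mem_index_iota => /andP[hc1 hc2]; apply: H; lia.
rewrite -[in LHS](add0n w) big_addn add0n addKn big_mkord.
by apply: eq_bigr => z _; rewrite addnC.
Qed.

Lemma sum_pt (V : nmodType) a (G : nat -> V) :
  (a < m)%N -> (forall c, (c < m)%N -> c != a -> G c = 0) ->
  \sum_(c < m) G c = G a.
Proof.
move=> ha H; rewrite (sum_window (w := a) (k := 1)); last 2 first.
- by rewrite addn1.
- by move=> c hc hw; apply: H => //; apply/eqP; lia.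
by rewrite big_ord1 addn0.
Qed.

Definition inw w k a := (w <= a < w + k)%N.
Definition loc w k (d : nat -> M) (W : nat -> nat -> M) a b :=
  if inw w k a && inw w k b then W (a - w)%N (b - w)%N
  else if a == b then d a else 0.

Lemma loc_mul w k d d' W W' a b :
  (w + k <= m)%N -> (a < m)%N -> (b < m)%N ->
  \sum_(c < m) loc w k d W a c *m loc w k d' W' c b =
  loc w k (fun a => d a *m d' a) (fun x y => \sum_(z < k) W x z *m W' z y) a b.
Proof.
move=> hwk ha hb.
case: (boolP (inw w k a)) => /= hia.
  rewrite (sum_window (w := w) (k := k) (G := fun c => loc w k d W a c *m loc w k d' W' c b)) //; last first.
    move=> c hc hic; have hic' : inw w k c = false by apply/negbTE.
    rewrite /loc hic' andbF.
    have -> : (a == c) = false by apply/negbTE/eqP => e; move: hic'; rewrite -e hia.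
    by rewrite mul0mx.
  case: (boolP (inw w k b)) => /= hib.
    rewrite /loc hia hib /=; apply: eq_bigr => z _.
    have hz : inw w k (w + z)%N by have := ltn_ord z; rewrite /inw; lia.
    by rewrite hz addKn.
  rewrite /loc hia (negbTE hib) /=.
  have -> : (a == b) = false by apply/negbTE/eqP => e; move: hib; rewrite -e hia.
  apply: big1 => z _.
  have hz : inw w k (w + z)%N by have := ltn_ord z; rewrite /inw; lia.
  rewrite hz /=; have -> : (w + z == b)%N = false.
    by apply/negbTE/eqP => e; move: hib; rewrite -e hz.
  by rewrite mulmx0.
rewrite (sum_pt (a := a) (G := fun c => loc w k d W a c *m loc w k d' W' c b)) //; last first.
  by move=> c hc /negbTE hca; rewrite /loc (negbTE hia) /= eq_sym hca mul0mx.
rewrite /loc (negbTE hia) /= eqxx; case: eqP => // _; by rewrite mulmx0.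
Qed.

Lemma mkblk_loc_mul w k d d' W W' :
  (w + k <= m)%N ->
  mkblk m (loc w k d W) *m mkblk m (loc w k d' W') =
  mkblk m (loc w k (fun a => d a *m d' a) (fun x y => \sum_(z < k) W x z *m W' z y)).
Proof.
move=> hwk; rewrite mkblk_mul; apply: mkblk_ext => a b ha hb.
exact: loc_mul.
Qed.

Lemma loc_add w k d d' W W' a b :
  loc w k d W a b + loc w k d' W' a b =
  loc w k (fun a => d a + d' a) (fun x y => W x y + W' x y) a b.
Proof. by rewrite /loc; case: ifP => //; case: ifP => // _ _; rewrite addr0. Qed.

Lemma loc_eq w k d d' W W' a b :
  (forall a, ~~ inw w k a -> d a = d' a) ->
  (forall x y, (x < k)%N -> (y < k)%N -> W x y = W' x y) ->
  loc w k d W a b = loc w k d' W' a b.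
Proof.
move=> hd hW; rewrite /loc; case: ifP => [/andP[ha hb]|].
  by apply: hW; move: ha hb; rewrite /inw; lia.
case: ifP => // /eqP <- /negbT; rewrite andbb => h; exact: hd.
Qed.

End Blk.

Section Main.
Variables (F : fieldType) (m n : nat) (Ac : nat -> 'M[F]_n).
Local Notation PF := {poly F}.
Local Notation M := 'M[PF]_n.
Local Notation P := (horner_shift m Ac).
Local Notation lam := ('X *: (1%:M : M)).

Definition W3 (a00 a01 a02 a10 a11 a12 a20 a21 a22 : M) (x y : nat) : M :=
  if x == 0%N then (if y == 0%N then a00 else if y == 1%N then a01 else if y == 2%N then a02 else 0)
  else if x == 1%N then (if y == 0%N then a10 else if y == 1%N then a11 else if y == 2%N then a12 else 0)
  else if x == 2%N then (if y == 0%N then a20 else if y == 1%N then a21 else if y == 2%N then a22 else 0)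
  else 0.


Variable i : nat.
Hypothesis hi1 : (1 <= i)%N.
Hypothesis him : (i < m)%N.

Lemma QB_loc k a b : (2 <= k <= 3)%N ->
  blkT (Q_blk F n i) a b = loc (i.-1) k (fun _ => 1%:M) (W3 1%:M 0 0 lam 1%:M 0 0 0 1%:M) a b.
Proof. move=> hk; rewrite /blkT /Q_blk /loc /W3 /inw; ifs. Qed.

Lemma Q_loc k a b : (2 <= k <= 3)%N ->
  Q_blk F n i a b = loc (i.-1) k (fun _ => 1%:M) (W3 1%:M lam 0 0 1%:M 0 0 0 1%:M) a b.
Proof. move=> hk; rewrite /Q_blk /loc /W3 /inw; ifs. Qed.

Lemma R_loc k a b : (2 <= k <= 3)%N ->
  R_blk m Ac i a b = loc (i.-1) k (fun _ => 1%:M) (W3 0 1%:M 0 1%:M (P i) 0 0 0 1%:M) a b.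
Proof. move=> hk; rewrite /R_blk /loc /W3 /inw; ifs. Qed.

Lemma RB_loc k a b : (2 <= k <= 3)%N ->
  blkT (R_blk m Ac i) a b = loc (i.-1) k (fun _ => 1%:M) (W3 0 1%:M 0 1%:M (P i) 0 0 0 1%:M) a b.
Proof. move=> hk; rewrite /blkT /R_blk /loc /W3 /inw; ifs. Qed.

Definition dD (a : nat) : M := if (a < i.-1)%N then 0 else lam.

Lemma D_loc k a b : (2 <= k <= 3)%N ->
  'X *: D_blk m Ac i a b = loc (i.-1) k dD (W3 ('X *: P i.-1) 0 0 0 lam 0 0 0 lam) a b.
Proof. move=> hk; rewrite /D_blk /dD /loc /W3 /inw; ifs; by rewrite scaler0. Qed.

Lemma D1_loc k a b : (2 <= k <= 3)%N ->
  'X *: D_blk m Ac i.+1 a b = loc (i.-1) k dD (W3 0 0 0 0 ('X *: P i) 0 0 0 lam) a b.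
Proof. move=> hk; rewrite /D_blk /dD /loc /W3 /inw; ifs; by rewrite scaler0. Qed.

Lemma T_loc k a b : (2 <= k <= 3)%N ->
  T_blk m Ac i a b = loc (i.-1) k (fun _ => 0)
    (W3 0 ('X *: P i.-1) 0 lam ('X ^+ 2 *: P i.-1) 0 0 0 0) a b.
Proof. move=> hk; rewrite /T_blk /loc /W3 /inw; ifs. Qed.

Lemma TB_loc k a b : (2 <= k <= 3)%N ->
  blkT (T_blk m Ac i) a b = loc (i.-1) k (fun _ => 0)
    (W3 0 lam 0 ('X *: P i.-1) ('X ^+ 2 *: P i.-1) 0 0 0 0) a b.
Proof. move=> hk; rewrite /blkT /T_blk /loc /W3 /inw; ifs. Qed.

Definition WF1 (a1 : M) := W3 1%:M 0 0 0 (- a1) 1%:M 0 1%:M 0.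
Definition WF2 (a2 : M) := W3 (- a2) 1%:M 0 1%:M 0 0 0 0 1%:M.

Lemma F1_loc a b : (i.+1 < m)%N ->
  fiedler_blk m Ac (m - i.+1) a b = loc (i.-1) 3 (fun _ => 1%:M) (WF1 (cst (Ac (m - i.+1)))) a b.
Proof.
move=> h; rewrite /fiedler_blk.
have -> : (m - i.+1 == 0)%N = false by lia.
have -> : (m - i.+1 == m)%N = false by lia.
rewrite /Mi_blk; cbv zeta.
have -> : (m - (m - i.+1) - 1 = i)%N by lia.
rewrite /WF1 /loc /W3 /inw; ifs.
Qed.

Lemma F1_loc0 a b : (i.+1 = m)%N ->
  fiedler_blk m Ac (m - i.+1) a b = loc (i.-1) 2 (fun _ => 1%:M) (WF1 (cst (Ac (m - i.+1)))) a b.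
Proof.
move=> h; have -> : (m - i.+1 = 0)%N by lia.
rewrite /fiedler_blk /M0_blk /WF1 /loc /W3 /inw /=; ifs.
Qed.

Lemma F2_loc k a b : (2 <= k <= 3)%N ->
  fiedler_blk m Ac (m - i) a b = loc (i.-1) k (fun _ => 1%:M) (WF2 (cst (Ac (m - i)))) a b.
Proof.
move=> hk; rewrite /fiedler_blk.
have -> : (m - i == 0)%N = false by lia.
have -> : (m - i == m)%N = false by lia.
rewrite /Mi_blk; cbv zeta.
have -> : (m - (m - i) - 1 = i.-1)%N by lia.
rewrite /WF2 /loc /W3 /inw; ifs.
Qed.

End Main.

Lemma horner_rec (F : fieldType) m n (Ac : nat -> 'M[F]_n) i : (1 <= i <= m)%N ->
  horner_shift m Ac i = cst (Ac (m - i)%N) + 'X *: horner_shift m Ac i.-1.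
Proof.
move=> hi; rewrite /horner_shift big_ord_recl expr0 scale1r addn0; congr (_ + _).
rewrite scaler_sumr prednK; last by lia.
apply: eq_bigr => j _; rewrite scalerA -exprS /=.
by have -> : (m - i + j.+1 = m - i.-1 + j)%N by lia.
Qed.


Section Main2.
Variables (F : fieldType) (m n : nat) (Ac : nat -> 'M[F]_n).
Local Notation PF := {poly F}.
Local Notation M := 'M[PF]_n.
Local Notation P := (horner_shift m Ac).
Local Notation lam := ('X *: (1%:M : M)).
Variable i : nat.
Hypothesis hi1 : (1 <= i)%N.
Hypothesis him : (i < m)%N.

Lemma a1 : mkblk m (blkT (Q_blk F n i)) *m ('X *: mkblk m (D_blk m Ac i)) *m mkblk m (R_blk m Ac i)
  = 'X *: mkblk m (D_blk m Ac i.+1) + mkblk m (T_blk m Ac i).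
Proof.
have hk : (2 <= 2 <= 3)%N by [].
have hw : (i.-1 + 2 <= m)%N by lia.
rewrite !mkblk_scale mkblk_add.
rewrite (mkblk_ext (fun a b _ _ => QB_loc F n hi1 him a b hk)).
rewrite (mkblk_ext (fun a b _ _ => D_loc Ac hi1 him a b hk)).
rewrite (mkblk_ext (fun a b _ _ => R_loc Ac hi1 him a b hk)).
rewrite !mkblk_loc_mul //.
apply: mkblk_ext => a b _ _.
rewrite (D1_loc Ac hi1 him a b hk) (T_loc Ac hi1 him a b hk) loc_add.
apply: loc_eq => [a' _|x y hx hy]; first by rewrite mul1mx mulmx1 addr0.
rewrite !big_ord_recr !big_ord0 /= /W3.
case: x hx => [|[|x]] // _; case: y hy => [|[|y]] // _ /=; msimp => //.
by rewrite addrC.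
Qed.

Lemma b1 : mkblk m (blkT (R_blk m Ac i)) *m ('X *: mkblk m (D_blk m Ac i)) *m mkblk m (Q_blk F n i)
  = 'X *: mkblk m (D_blk m Ac i.+1) + mkblk m (blkT (T_blk m Ac i)).
Proof.
have hk : (2 <= 2 <= 3)%N by [].
have hw : (i.-1 + 2 <= m)%N by lia.
rewrite !mkblk_scale mkblk_add.
rewrite (mkblk_ext (fun a b _ _ => RB_loc Ac hi1 him a b hk)).
rewrite (mkblk_ext (fun a b _ _ => D_loc Ac hi1 him a b hk)).
rewrite (mkblk_ext (fun a b _ _ => Q_loc F n hi1 him a b hk)).
rewrite !mkblk_loc_mul //.
apply: mkblk_ext => a b _ _.
rewrite (D1_loc Ac hi1 him a b hk) (TB_loc Ac hi1 him a b hk) loc_add.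
apply: loc_eq => [a' _|x y hx hy]; first by rewrite mul1mx mulmx1 addr0.
rewrite !big_ord_recr !big_ord0 /= /W3.
case: x hx => [|[|x]] // _; case: y hy => [|[|y]] // _ /=; msimp => //.
by rewrite addrC.
Qed.

Lemma a2_gen k : (2 <= k <= 3)%N -> (i.-1 + k <= m)%N ->
  (forall a b, fiedler_blk m Ac (m - i.+1) a b = loc (i.-1) k (fun _ => 1%:M) (WF1 (cst (Ac (m - i.+1)))) a b) ->
  mkblk m (blkT (Q_blk F n i)) *m (mkblk m (fiedler_blk m Ac (m - i.+1)) *m mkblk m (fiedler_blk m Ac (m - i)))
    *m mkblk m (R_blk m Ac i)
  = mkblk m (fiedler_blk m Ac (m - i.+1)) + mkblk m (T_blk m Ac i).
Proof.
move=> hk hw hF1.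
rewrite (mkblk_ext (fun a b _ _ => hF1 a b)).
rewrite (mkblk_ext (fun a b _ _ => QB_loc F n hi1 him a b hk)).
rewrite (mkblk_ext (fun a b _ _ => F2_loc Ac hi1 him a b hk)).
rewrite (mkblk_ext (fun a b _ _ => R_loc Ac hi1 him a b hk)).
rewrite !mkblk_loc_mul // mkblk_add.
apply: mkblk_ext => a b _ _.
rewrite (T_loc Ac hi1 him a b hk) loc_add.
apply: loc_eq => [a' _|x y]; first by msimp.
have hP : P i = cst (Ac (m - i)%N) + 'X *: P i.-1 by apply: horner_rec; lia.
have [->|->] : k = 2%N \/ k = 3%N by lia.
{ move=> hx hy; rewrite !big_ord_recr !big_ord0 /= /WF1 /WF2 /W3.
  case: x hx => [|[|x]] // _; case: y hy => [|[|y]] // _ /=; msimp => //.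
  - by rewrite hP addKr.
  - by rewrite hP scalerDr scalerA -expr2 addrACA addNr add0r. }
move=> hx hy; rewrite !big_ord_recr !big_ord0 /= /WF1 /WF2 /W3.
case: x hx => [|[|[|x]]] // _; case: y hy => [|[|[|y]]] // _ /=; msimp => //.
- by rewrite hP addKr.
- by rewrite hP scalerDr scalerA -expr2 addrACA addNr add0r.
Qed.

Lemma b2_gen k : (2 <= k <= 3)%N -> (i.-1 + k <= m)%N ->
  (forall a b, fiedler_blk m Ac (m - i.+1) a b = loc (i.-1) k (fun _ => 1%:M) (WF1 (cst (Ac (m - i.+1)))) a b) ->
  mkblk m (blkT (R_blk m Ac i)) *m (mkblk m (fiedler_blk m Ac (m - i)) *m mkblk m (fiedler_blk m Ac (m - i.+1)))
    *m mkblk m (Q_blk F n i)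
  = mkblk m (fiedler_blk m Ac (m - i.+1)) + mkblk m (blkT (T_blk m Ac i)).
Proof.
move=> hk hw hF1.
rewrite (mkblk_ext (fun a b _ _ => hF1 a b)).
rewrite (mkblk_ext (fun a b _ _ => RB_loc Ac hi1 him a b hk)).
rewrite (mkblk_ext (fun a b _ _ => F2_loc Ac hi1 him a b hk)).
rewrite (mkblk_ext (fun a b _ _ => Q_loc F n hi1 him a b hk)).
rewrite !mkblk_loc_mul // mkblk_add.
apply: mkblk_ext => a b _ _.
rewrite (TB_loc Ac hi1 him a b hk) loc_add.
apply: loc_eq => [a' _|x y]; first by msimp.
have hP : P i = cst (Ac (m - i)%N) + 'X *: P i.-1 by apply: horner_rec; lia.
have [->|->] : k = 2%N \/ k = 3%N by lia.
{ move=> hx hy; rewrite !big_ord_recr !big_ord0 /= /WF1 /WF2 /W3.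
  case: x hx => [|[|x]] // _; case: y hy => [|[|y]] // _ /=; msimp => //.
  - by rewrite hP addKr.
  - by rewrite hP scalerDr scalerA -expr2 addKr addrC. }
move=> hx hy; rewrite !big_ord_recr !big_ord0 /= /WF1 /WF2 /W3.
case: x hx => [|[|[|x]]] // _; case: y hy => [|[|[|y]]] // _ /=; msimp => //.
- by rewrite hP addKr.
- by rewrite hP scalerDr scalerA -expr2 addKr addrC.
Qed.
End Main2.


Lemma emC_col (F : fieldType) m n r (C : 'M[F]_(n, r)) :
  emC m C = mkcol m (fun a => if a == (m - 1)%N then cst C else 0).
Proof. by apply/matrixP => p q; rewrite !mxE; case: ifP => //; rewrite mxE. Qed.

Lemma emB_row (F : fieldType) m n r (B : 'M[F]_(r, n)) :
  emB m B = mkrow m (fun b => if b == (m - 1)%N then cst B else 0).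
Proof. by apply/matrixP => p q; rewrite !mxE; case: ifP => //; rewrite mxE. Qed.

Section C.
Variables (F : fieldType) (m n : nat) (Ac : nat -> 'M[F]_n).
Variables (i j : nat).
Hypothesis hi1 : (1 <= i)%N.
Hypothesis hij : (j + i + 2 <= m)%N.

Ltac unf := rewrite /blkT /T_blk /fiedler_blk /M0_blk /Mm_blk /Mi_blk; cbv zeta.

Lemma Fj_lowr c b : (c <= i)%N -> fiedler_blk m Ac j c b = if c == b then 1%:M else 0.
Proof. move=> h; unf; ifs. Qed.
Lemma Fj_lowc a c : (c <= i)%N -> fiedler_blk m Ac j a c = if a == c then 1%:M else 0.
Proof. move=> h; unf; ifs. Qed.
Lemma T_hic a c : (i < c)%N -> T_blk m Ac i a c = 0.
Proof. move=> h; unf; ifs. Qed.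
Lemma T_hir c b : (i < c)%N -> T_blk m Ac i c b = 0.
Proof. move=> h; unf; ifs. Qed.

Lemma Tc_off a c b : c != b -> T_blk m Ac i a c *m fiedler_blk m Ac j c b = 0.
Proof.
move=> h; case: (leqP c i) => hc; first by rewrite Fj_lowr // (negbTE h) mulmx0.
by rewrite T_hic // mul0mx.
Qed.
Lemma Tc_diag a b : T_blk m Ac i a b *m fiedler_blk m Ac j b b = T_blk m Ac i a b.
Proof.
case: (leqP b i) => hc; first by rewrite Fj_lowr // eqxx mulmx1.
by rewrite T_hic // mul0mx.
Qed.
Lemma cT_off a c b : a != c -> fiedler_blk m Ac j a c *m T_blk m Ac i c b = 0.
Proof.
move=> h; case: (leqP c i) => hc; first by rewrite Fj_lowc // (negbTE h) mul0mx.
by rewrite T_hir // mulmx0.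
Qed.
Lemma cT_diag a b : fiedler_blk m Ac j a a *m T_blk m Ac i a b = T_blk m Ac i a b.
Proof.
case: (leqP a i) => hc; first by rewrite Fj_lowc // eqxx mul1mx.
by rewrite T_hir // mulmx0.
Qed.
Lemma TBc_off a c b : c != b -> blkT (T_blk m Ac i) a c *m fiedler_blk m Ac j c b = 0.
Proof.
move=> h; rewrite /blkT; case: (leqP c i) => hc; first by rewrite Fj_lowr // (negbTE h) mulmx0.
by rewrite T_hir // mul0mx.
Qed.
Lemma TBc_diag a b : blkT (T_blk m Ac i) a b *m fiedler_blk m Ac j b b = blkT (T_blk m Ac i) a b.
Proof.
rewrite /blkT; case: (leqP b i) => hc; first by rewrite Fj_lowr // eqxx mulmx1.
by rewrite T_hir // mul0mx.
Qed.
Lemma cTB_off a c b : a != c -> fiedler_blk m Ac j a c *m blkT (T_blk m Ac i) c b = 0.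
Proof.
move=> h; rewrite /blkT; case: (leqP c i) => hc; first by rewrite Fj_lowc // (negbTE h) mul0mx.
by rewrite T_hic // mulmx0.
Qed.
Lemma cTB_diag a b : fiedler_blk m Ac j a a *m blkT (T_blk m Ac i) a b = blkT (T_blk m Ac i) a b.
Proof.
rewrite /blkT; case: (leqP a i) => hc; first by rewrite Fj_lowc // eqxx mul1mx.
by rewrite T_hic // mulmx0.
Qed.

Lemma c_TM : mkblk m (T_blk m Ac i) *m mkblk m (fiedler_blk m Ac j) = mkblk m (T_blk m Ac i).
Proof.
rewrite mkblk_mul; apply: mkblk_ext => a b ha hb.
rewrite (@sum_pt _ _ b (fun c => T_blk m Ac i a c *m fiedler_blk m Ac j c b)) //.
  exact: Tc_diag.
by move=> c _ h; exact: Tc_off.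
Qed.
Lemma c_MT : mkblk m (fiedler_blk m Ac j) *m mkblk m (T_blk m Ac i) = mkblk m (T_blk m Ac i).
Proof.
rewrite mkblk_mul; apply: mkblk_ext => a b ha hb.
rewrite (@sum_pt _ _ a (fun c => fiedler_blk m Ac j a c *m T_blk m Ac i c b)) //.
  exact: cT_diag.
by move=> c _ h; apply: cT_off; rewrite eq_sym.
Qed.
Lemma c_TBM : mkblk m (blkT (T_blk m Ac i)) *m mkblk m (fiedler_blk m Ac j) = mkblk m (blkT (T_blk m Ac i)).
Proof.
rewrite mkblk_mul; apply: mkblk_ext => a b ha hb.
rewrite (@sum_pt _ _ b (fun c => blkT (T_blk m Ac i) a c *m fiedler_blk m Ac j c b)) //.
  exact: TBc_diag.
by move=> c _ h; exact: TBc_off.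
Qed.
Lemma c_MTB : mkblk m (fiedler_blk m Ac j) *m mkblk m (blkT (T_blk m Ac i)) = mkblk m (blkT (T_blk m Ac i)).
Proof.
rewrite mkblk_mul; apply: mkblk_ext => a b ha hb.
rewrite (@sum_pt _ _ a (fun c => fiedler_blk m Ac j a c *m blkT (T_blk m Ac i) c b)) //.
  exact: cTB_diag.
by move=> c _ h; apply: cTB_off; rewrite eq_sym.
Qed.

Lemma T_emC r (C : 'M[F]_(n, r)) : mkblk m (T_blk m Ac i) *m emC m C = 0.
Proof.
rewrite emC_col mkblk_mulcol -(mkcol0 F m n r); apply: mkcol_ext => a _.
apply: big1 => c _; case: eqP => [->|]; last by rewrite mulmx0.
by rewrite T_hic ?mul0mx //; lia.
Qed.
Lemma TB_emC r (C : 'M[F]_(n, r)) : mkblk m (blkT (T_blk m Ac i)) *m emC m C = 0.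
Proof.
rewrite emC_col mkblk_mulcol -(mkcol0 F m n r); apply: mkcol_ext => a _.
apply: big1 => c _; case: eqP => [->|]; last by rewrite mulmx0.
by rewrite /blkT T_hir ?mul0mx //; lia.
Qed.
Lemma emB_T r (B : 'M[F]_(r, n)) : emB m B *m mkblk m (T_blk m Ac i) = 0.
Proof.
rewrite emB_row mkrow_mulblk -(mkrow0 F m n r); apply: mkrow_ext => b _.
apply: big1 => c _; case: eqP => [->|]; last by rewrite mul0mx.
by rewrite T_hir ?mulmx0 //; lia.
Qed.
Lemma emB_TB r (B : 'M[F]_(r, n)) : emB m B *m mkblk m (blkT (T_blk m Ac i)) = 0.
Proof.
rewrite emB_row mkrow_mulblk -(mkrow0 F m n r); apply: mkrow_ext => b _.
apply: big1 => c _; case: eqP => [->|]; last by rewrite mul0mx.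
by rewrite /blkT T_hic ?mulmx0 //; lia.
Qed.

End C.

Section Last.
Variables (F : fieldType) (m n r : nat) (Ac : nat -> 'M[F]_n).
Variables (B : 'M[F]_(r, n)) (C : 'M[F]_(n, r)).
Variables (i : nat).
Hypothesis hi1 : (1 <= i)%N.
Hypothesis hm : (i.+1 = m)%N.

Lemma QB_emC : mkblk m (blkT (Q_blk F n i)) *m emC m C = emC m C.
Proof.
rewrite emC_col mkblk_mulcol; apply: mkcol_ext => a ha.
rewrite (@sum_pt _ _ (m - 1)%N (fun c => blkT (Q_blk F n i) a c *m (if c == (m - 1)%N then cst C else 0))); last 2 first.
- lia.
- by move=> c _ h; rewrite (negbTE h) mulmx0.
rewrite eqxx /blkT /Q_blk; ifs; by msimp.
Qed.

Lemma emB_Q : emB m B *m mkblk m (Q_blk F n i) = emB m B.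
Proof.
rewrite emB_row mkrow_mulblk; apply: mkrow_ext => b hb.
rewrite (@sum_pt _ _ (m - 1)%N (fun c => (if c == (m - 1)%N then cst B else 0) *m Q_blk F n i c b)); last 2 first.
- lia.
- by move=> c _ h; rewrite (negbTE h) mul0mx.
rewrite eqxx /Q_blk; ifs; by msimp.
Qed.

Lemma Bfi c : \sum_(d < m) (if (d : nat) == (m - 1)%N then cst B else 0) *m fiedler_blk m Ac (m - i) d c
  = if c == i.-1 then cst B else 0.
Proof.
rewrite (@sum_pt _ _ (m - 1)%N (fun d => (if d == (m - 1)%N then cst B else 0) *m fiedler_blk m Ac (m - i) d c)); last 2 first.
- lia.
- by move=> d _ h; rewrite (negbTE h) mul0mx.
rewrite eqxx /fiedler_blk /Mi_blk; cbv zeta; ifs; by msimp.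
Qed.

Lemma fiC a : \sum_(d < m) fiedler_blk m Ac (m - i) a d *m (if (d : nat) == (m - 1)%N then cst C else 0)
  = if a == i.-1 then cst C else 0.
Proof.
rewrite (@sum_pt _ _ (m - 1)%N (fun d => fiedler_blk m Ac (m - i) a d *m (if d == (m - 1)%N then cst C else 0))); last 2 first.
- lia.
- by move=> d _ h; rewrite (negbTE h) mulmx0.
rewrite eqxx /fiedler_blk /Mi_blk; cbv zeta; ifs; by msimp.
Qed.

Lemma emB_F_R : emB m B *m mkblk m (fiedler_blk m Ac (m - i)) *m mkblk m (R_blk m Ac i) = emB m B.
Proof.
rewrite emB_row !mkrow_mulblk; apply: mkrow_ext => b hb.
rewrite (eq_bigr (fun c : 'I_m => (if (c : nat) == i.-1 then cst B else 0) *m R_blk m Ac i c b)); last first.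
  by move=> c _; rewrite Bfi.
rewrite (@sum_pt _ _ i.-1 (fun c => (if c == i.-1 then cst B else 0) *m R_blk m Ac i c b)); last 2 first.
- lia.
- by move=> d _ h; rewrite (negbTE h) mul0mx.
rewrite eqxx /R_blk; ifs; by msimp.
Qed.

Lemma RB_F_emC : mkblk m (blkT (R_blk m Ac i)) *m (mkblk m (fiedler_blk m Ac (m - i)) *m emC m C) = emC m C.
Proof.
rewrite emC_col !mkblk_mulcol; apply: mkcol_ext => a ha.
rewrite (eq_bigr (fun c : 'I_m => blkT (R_blk m Ac i) a c *m (if (c : nat) == i.-1 then cst C else 0))); last first.
  by move=> c _; rewrite fiC.
rewrite (@sum_pt _ _ i.-1 (fun c => blkT (R_blk m Ac i) a c *m (if c == i.-1 then cst C else 0))); last 2 first.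
- lia.
- by move=> d _ h; rewrite (negbTE h) mulmx0.
rewrite eqxx /blkT /R_blk; ifs; by msimp.
Qed.

End Last.

Ltac bsimp := rewrite ?(mul0mx, mulmx0, mul1mx, mulmx1, add0r, addr0, scaler0, mulNmx, mulmxN, opprK, oppr0).

Unset Implicit Arguments.

Theorem lemma4p10 (F : fieldType) (m n r : nat) (Ac : nat -> 'M[F]_n)
    (A E : 'M[F]_r) (B : 'M[F]_(r, n)) (C : 'M[F]_(n, r)) :
  Ac m != 0 ->
  forall i : nat, (1 <= i <= m - 1)%N ->
  let M := sysM m Ac A E B C in
  let Q := sysQ F m n r in
  let QB := sysQB F m n r in
  let R := sysR m r Ac in
  let RB := sysRB m r Ac in
  let T := sysT m r Ac in
  let TB := sysTB m r Ac in
  let D := sysD m Ac E in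
  [/\ (* (a) *)
      QB i *m ('X *: D i) *m R i = 'X *: D i.+1 + T i
      /\ QB i *m (M (m - i.+1)%N *m M (m - i)%N) *m R i = M (m - i.+1)%N + T i,
      (* (b) *)
      RB i *m ('X *: D i) *m Q i = 'X *: D i.+1 + TB i
      /\ RB i *m (M (m - i)%N *m M (m - i.+1)%N) *m Q i = M (m - i.+1)%N + TB i
    & (* (c): all j <= m - i - 2 (as integers) *)
      forall j : nat, (j + i + 2 <= m)%N ->
        [/\ T i *m M j = T i, M j *m T i = T i,
            TB i *m M j = TB i & M j *m TB i = TB i]].
Proof.
move=> hA i /andP[hi1 him'] M Q QB R RB T TB D.
have him : (i < m)%N by lia.
rewrite /M /Q /QB /R /RB /T /TB /D.
split.
- split.
  + rewrite /sysQB /sysD /sysR /sysT !scale_block_mx !mulmx_block add_block_mx; bsimp.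
    by rewrite (a1 Ac hi1 him).
  + case: (ltnP i.+1 m) => him2.
      rewrite /sysQB /sysR /sysT /sysM.
      have -> : (m - i.+1 == 0)%N = false by lia.
      have -> : (m - i.+1 == m)%N = false by lia.
      have -> : (m - i == 0)%N = false by lia.
      have -> : (m - i == m)%N = false by lia.
      rewrite !mulmx_block add_block_mx; bsimp.
      have hk : (2 <= 3 <= 3)%N by [].
      have hw : (i.-1 + 3 <= m)%N by lia.
      by rewrite (a2_gen hi1 him hk hw (fun a b => F1_loc Ac hi1 him a b him2)).
    have hm : i.+1 = m by lia.
    have hk : (2 <= 2 <= 3)%N by [].
    have hw : (i.-1 + 2 <= m)%N by lia.
    have := a2_gen hi1 him hk hw (fun a b => F1_loc0 Ac hi1 him a b hm).
    have -> : (m - i.+1 = 0)%N by lia.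
    move=> h.
    rewrite /sysQB /sysR /sysT /sysM /=.
    have -> : (m - i == 0)%N = false by lia.
    have -> : (m - i == m)%N = false by lia.
    rewrite !mulmx_block add_block_mx; bsimp.
    by rewrite h (QB_emC C hi1 hm) (emB_F_R Ac B hi1 hm).
- split.
  + rewrite /sysRB /sysD /sysQ /sysTB !scale_block_mx !mulmx_block add_block_mx; bsimp.
    by rewrite (b1 Ac hi1 him).
  + case: (ltnP i.+1 m) => him2.
      rewrite /sysRB /sysQ /sysTB /sysM.
      have -> : (m - i.+1 == 0)%N = false by lia.
      have -> : (m - i.+1 == m)%N = false by lia.
      have -> : (m - i == 0)%N = false by lia.
      have -> : (m - i == m)%N = false by lia.
      rewrite !mulmx_block add_block_mx; bsimp.
      have hk : (2 <= 3 <= 3)%N by [].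
      have hw : (i.-1 + 3 <= m)%N by lia.
      by rewrite (b2_gen hi1 him hk hw (fun a b => F1_loc Ac hi1 him a b him2)).
    have hm : i.+1 = m by lia.
    have hk : (2 <= 2 <= 3)%N by [].
    have hw : (i.-1 + 2 <= m)%N by lia.
    have := b2_gen hi1 him hk hw (fun a b => F1_loc0 Ac hi1 him a b hm).
    have -> : (m - i.+1 = 0)%N by lia.
    move=> h.
    rewrite /sysRB /sysQ /sysTB /sysM /=.
    have -> : (m - i == 0)%N = false by lia.
    have -> : (m - i == m)%N = false by lia.
    rewrite !mulmx_block add_block_mx; bsimp.
    by rewrite h (RB_F_emC Ac C hi1 hm) (emB_Q B hi1 hm).
- move=> j hj.
  rewrite /sysT /sysTB /sysM.
  have -> : (j == m)%N = false by lia.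
  case: eqP => [ej|nj].
    subst j.
    rewrite !mulmx_block; bsimp.
    rewrite (c_TM Ac hi1 hj) (c_MT Ac hi1 hj) (c_TBM Ac hi1 hj) (c_MTB Ac hi1 hj).
    rewrite (T_emC Ac hi1 hj C) (emB_T Ac hi1 hj B) (TB_emC Ac hi1 hj C) (emB_TB Ac hi1 hj B) !oppr0.
    by split.
  rewrite !mulmx_block; bsimp.
  rewrite (c_TM Ac hi1 hj) (c_MT Ac hi1 hj) (c_TBM Ac hi1 hj) (c_MTB Ac hi1 hj).
  by split.
Qed.
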